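(* Let $0\le\underline{\tau}<\overline{\tau}<\infty$, $\gamma\ge0$, let $f$ be a piecewise continuous probability density supported on $[\underline{\tau},\overline{\tau}]$, and let $\beta:[0,\infty)\to(0,\infty)$ be continuous and decreasing with $\lim_{x\to+\infty}\beta(x)=0$ and with $x\mapsto x\beta(x)$ Lipschitz. Assume $\delta=0$ and $$\int_{\underline{\tau}}^{\overline{\tau}}e^{-\gamma\tau}f(\tau)\,d\tau>\frac12,$$ and assume there exists $\overline{x}\ge0$ such that $x\mapsto x\beta(x)$ is decreasing on $[\overline{x},\infty)$. For $\mu\ge0$ let $x(t)$ be the unique continuous solution on $[0,\infty)$ of: $x(0)=\mu$; $$x'(t)=-\beta(x(t))x(t)+2\beta(\mu)\mu\int_{\underline{\tau}}^{\overline{\tau}}e^{-\gamma\tau}f(\tau)d\tau,\quad 0\le t\le\underline{\tau};$$ $$x'(t)=-\beta(x(t))x(t)+2\beta(\mu)\mu\int_t^{\overline{\tau}}e^{-\gamma\tau}f(\tau)d\tau+2\int_{\underline{\tau}}^{t}e^{-\gamma\tau}f(\tau)\beta(x(t-\tau))x(t-\tau)d\tau,\quad \underline{\tau}\le t\le\overline{\tau};$$ $$x'(t)=-\beta(x(t))x(t)+2\int_{\underline{\tau}}^{\overline{\tau}}e^{-\gamma\tau}f(\tau)\beta(x(t-\tau))x(t-\tau)d\tau,\quad t\ge\overline{\tau}.$$ If $\mu\ge\overline{x}$, then $\lim_{t\to+\infty}x(t)=+\infty$.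
   Context: This $x(t)$ is the total resting stem cell population in an age-structured hematopoiesis model (with resting-cell loss rate $\delta=0$, proliferating-cell apoptosis rate $\gamma$, entry rate $\beta(x)$ into proliferation, and division-time density $f$), where the initial resting population is $\mu$ and the initial proliferating age distribution is the one consistent with the model. *)

(* Defs.v *)
From Stdlib Require Import Reals Lra.
From Coquelicot Require Import Coquelicot.
Open Scope R_scope.

Definition piecewise_continuous_on (f : R -> R) (a b : R) : Prop :=
  exists (n : nat) (p : nat -> R),
    p 0%nat = a /\ p n = b /\
    (forall i, (i < n)%nat -> p i < p (S i)) /\
    (forall i, (i < n)%nat ->
       (forall s, p i < s < p (S i) -> continuous f s) /\
       (exists l : R, filterlim f (at_right (p i)) (locally l)) /\
       (exists l : R, filterlim f (at_left (p (S i))) (locally l))).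

Definition pc_density_on (f : R -> R) (a b : R) : Prop :=
  piecewise_continuous_on f a b /\
  (forall s, 0 <= f s) /\
  (forall s, (s < a \/ b < s) -> f s = 0) /\
  RInt f a b = 1.

Definition continuous_on_nonneg (g : R -> R) : Prop :=
  forall s, 0 <= s -> filterlim g (within (fun y => 0 <= y) (locally s)) (locally (g s)).

Definition rhs (beta f x : R -> R) (gamma tau_lo tau_hi mu t : R) : R :=
  if Rle_dec t tau_lo then
    - beta (x t) * x t
    + 2 * beta mu * mu * RInt (fun s => exp (- gamma * s) * f s) tau_lo tau_hi
  else if Rle_dec t tau_hi then
    - beta (x t) * x t
    + 2 * beta mu * mu * RInt (fun s => exp (- gamma * s) * f s) t tau_hi
    + 2 * RInt (fun s => exp (- gamma * s) * f s * beta (x (t - s)) * x (t - s)) tau_lo t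
  else
    - beta (x t) * x t
    + 2 * RInt (fun s => exp (- gamma * s) * f s * beta (x (t - s)) * x (t - s)) tau_lo tau_hi.

(* Main.v *)
Require Import Defs.
From Stdlib Require Import Reals Lra Lia Classical.
From Coquelicot Require Import Coquelicot.
Open Scope R_scope.

Lemma ballR (x e y : R) : ball x e y <-> Rabs (y - x) < e.
Proof. reflexivity. Qed.

Lemma piece_int (f phi : R -> R) (u v : R) :
  u < v -> (forall s, u < s < v -> continuous f s) ->
  (exists l : R, filterlim f (at_right u) (locally l)) ->
  (exists l : R, filterlim f (at_left v) (locally l)) ->
  (forall z, continuous phi z) ->
  ex_RInt (fun s => f s * phi s) u v.
Proof.
  intros Huv Hc [l1 H1] [l2 H2] Hphi.
  set (F := fun s => if Rle_dec s u then l1 else if Rle_dec v s then l2 else f s).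
  apply ex_RInt_ext with (fun s => F s * phi s).
  { rewrite Rmin_left by lra; rewrite Rmax_right by lra.
    intros s Hs; unfold F; destruct (Rle_dec s u); [lra|]; destruct (Rle_dec v s); [lra|]; auto. }
  apply (@ex_RInt_continuous R_CompleteNormedModule).
  rewrite Rmin_left by lra; rewrite Rmax_right by lra.
  intros z Hz.
  apply (continuous_mult F phi z); [|apply Hphi].
  destruct (Req_dec z u) as [Ez|Nz].
  - subst z. unfold continuous. apply filterlim_locally. intros eps.
    apply filterlim_locally with (eps := eps) in H1.
    destruct H1 as [d Hd].
    assert (Hp : 0 < Rmin d (v - u)) by (apply Rmin_pos; [apply cond_pos|lra]).
    exists (mkposreal _ Hp). intros y Hy. rewrite ballR in Hy. simpl in Hy.
    assert (Hy1 := Rmin_l d (v-u)). assert (Hy2 := Rmin_r d (v-u)).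
    assert (Fu : F u = l1) by (unfold F; destruct (Rle_dec u u); lra). rewrite Fu.
    unfold F. destruct (Rle_dec y u). { apply ball_center. }
    destruct (Rle_dec v y).
    { exfalso. apply Rabs_def2 in Hy. lra. }
    apply Hd. rewrite ballR. lra. lra.
  - destruct (Req_dec z v) as [Ez'|Nz'].
    + subst z. unfold continuous. apply filterlim_locally. intros eps.
      apply filterlim_locally with (eps := eps) in H2.
      destruct H2 as [d Hd].
      assert (Hp : 0 < Rmin d (v - u)) by (apply Rmin_pos; [apply cond_pos|lra]).
      exists (mkposreal _ Hp). intros y Hy. rewrite ballR in Hy. simpl in Hy.
      assert (Hy1 := Rmin_l d (v-u)). assert (Hy2 := Rmin_r d (v-u)).
      assert (Fv : F v = l2) by (unfold F; destruct (Rle_dec v u); [lra|]; destruct (Rle_dec v v); lra). rewrite Fv.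
      unfold F. destruct (Rle_dec y u). { exfalso. apply Rabs_def2 in Hy. lra. }
      destruct (Rle_dec v y). { apply ball_center. }
      apply Hd. rewrite ballR. lra. lra.
    + assert (Hzz : u < z < v) by lra.
      apply continuous_ext_loc with f; [|apply Hc; auto].
      assert (Hp : 0 < Rmin (z - u) (v - z)) by (apply Rmin_pos; lra).
      exists (mkposreal _ Hp). intros y Hy. rewrite ballR in Hy. simpl in Hy.
      assert (Hy1 := Rmin_l (z-u) (v-z)). assert (Hy2 := Rmin_r (z-u) (v-z)).
      apply Rabs_def2 in Hy.
      unfold F. destruct (Rle_dec y u); [lra|]. destruct (Rle_dec v y); [lra|]. auto.
Qed.

Lemma pc_int (f phi : R -> R) (a b : R) :
  piecewise_continuous_on f a b -> (forall z, continuous phi z) ->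
  ex_RInt (fun s => f s * phi s) a b.
Proof.
  intros [n [p [H0 [Hn [Hinc Hpc]]]]] Hphi. subst a b.
  assert (forall k, (k <= n)%nat -> ex_RInt (fun s => f s * phi s) (p 0%nat) (p k)).
  { induction k; intros Hk; [apply ex_RInt_point|].
    apply ex_RInt_Chasles with (p k). apply IHk; lia.
    destruct (Hpc k) as [Hc [Hl Hr]]; [lia|].
    apply piece_int; auto; apply Hinc; lia. }
  apply H; lia.
Qed.
Lemma mvt_open (F D : R -> R) a b : a < b ->
  (forall c, a < c < b -> is_derive F c (D c)) ->
  (forall c, a <= c <= b -> continuity_pt F c) ->
  exists c, a < c < b /\ F b - F a = D c * (b - a).
Proof.
  intros Hab HD Hc.
  pose (pr1 := fun c (P : a < c < b) =>
     exist (fun l => derivable_pt_abs F c l) (D c) (proj1 (is_derive_Reals _ _ _) (HD c P))).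
  pose (pr2 := fun c (_ : a < c < b) => derivable_pt_id c).
  destruct (MVT F id a b pr1 pr2 Hab Hc) as [c [P HP]].
  { intros; apply derivable_continuous_pt, derivable_pt_id. }
  exists c; split; auto.
  unfold pr1, pr2 in HP. simpl in HP. rewrite derive_pt_id in HP. unfold id in HP. lra.
Qed.

Lemma rmax_lip y z : Rabs (Rmax y 0 - Rmax z 0) <= Rabs (y - z).
Proof.
  unfold Rmax; destruct (Rle_dec y 0); destruct (Rle_dec z 0);
  unfold Rabs; repeat destruct Rcase_abs; lra.
Qed.

Lemma clamp_cont (h : R -> R) : continuous_on_nonneg h ->
  forall z, continuous (fun y => h (Rmax y 0)) z.
Proof.
  intros Hh z. unfold continuous.
  apply filterlim_comp with (G := within (fun y => 0 <= y) (locally (Rmax z 0))).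
  - intros P [eps HP]. exists eps. intros y Hy. apply HP.
    rewrite ballR in *. eapply Rle_lt_trans; [apply rmax_lip|]. exact Hy.
    apply Rmax_r.
  - apply Hh. apply Rmax_r.
Qed.

Lemma deriv_pos (F : R -> R) t l : is_derive F t l -> 0 < l ->
  exists d, 0 < d /\ forall h, 0 < h < d -> F t < F (t + h).
Proof.
  intros H Hl. apply is_derive_Reals in H.
  destruct (H (l/2)) as [d Hd]; [lra|].
  exists d; split; [apply cond_pos|]. intros h Hh.
  assert (Hh0 : h <> 0) by lra.
  assert (Ha : Rabs h < d) by (rewrite Rabs_pos_eq; lra).
  specialize (Hd h Hh0 Ha). apply Rabs_def2 in Hd.
  assert (Hq : 0 < (F (t + h) - F t) / h) by lra.
  assert (0 < F (t + h) - F t).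
  { replace (F (t + h) - F t) with (((F (t + h) - F t) / h) * h) by (field; lra).
    apply Rmult_lt_0_compat; lra. }
  lra.
Qed.

Lemma exp_cont (gamma : R) z : continuous (fun s => exp (- gamma * s)) z.
Proof. apply continuity_pt_filterlim. apply derivable_continuous_pt. reg. Qed.

Lemma m_cont c z : continuous (fun s => c - s) z.
Proof. apply continuity_pt_filterlim. apply derivable_continuous_pt. reg. Qed.

Lemma int_ef (f : R -> R) gamma lo hi a b : piecewise_continuous_on f lo hi ->
  lo <= a -> a <= b -> b <= hi -> ex_RInt (fun s => exp (- gamma * s) * f s) a b.
Proof.
  intros Hpc H1 H2 H3.
  assert (H : ex_RInt (fun s => exp (- gamma * s) * f s) lo hi).
  { apply ex_RInt_ext with (fun s => f s * exp (- gamma * s)).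
    intros; apply Rmult_comm. apply pc_int; auto. intros; apply exp_cont. }
  apply (@ex_RInt_Chasles_2 R_CompleteNormedModule) with lo; [lra|].
  apply (@ex_RInt_Chasles_1 R_CompleteNormedModule) with hi; [lra|]. exact H.
Qed.

Lemma zero_part (f : R -> R) gamma lo a : (forall s, s < lo -> f s = 0) -> a <= lo ->
  ex_RInt (fun s => exp (- gamma * s) * f s) a lo /\ RInt (fun s => exp (- gamma * s) * f s) a lo = 0.
Proof.
  intros Hf Ha.
  assert (E : forall s, Rmin a lo < s < Rmax a lo -> (fun _ => 0) s = exp (- gamma * s) * f s).
  { rewrite Rmin_left, Rmax_right by lra. intros s Hs. rewrite Hf by lra. ring. }
  split.
  - apply ex_RInt_ext with (fun _ => 0). exact E. apply ex_RInt_const.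
  - rewrite <- (RInt_ext _ _ _ _ E). rewrite RInt_const. unfold scal; simpl; unfold mult; simpl; ring.
Qed.

Lemma RInt_mult_const (h : R -> R) a b k : ex_RInt h a b ->
  RInt (fun s => h s * k) a b = RInt h a b * k.
Proof.
  intros H. rewrite Rmult_comm.
  rewrite (RInt_ext (fun s => h s * k) (fun s => scal k (h s))).
  rewrite (@RInt_scal R_CompleteNormedModule); auto.
  intros; unfold scal; simpl; unfold mult; simpl; ring.
Qed.

Lemma int_I (f beta x : R -> R) gamma lo hi c a b :
  piecewise_continuous_on f lo hi -> continuous_on_nonneg beta -> continuous_on_nonneg x ->
  0 <= lo -> lo <= a -> a <= b -> b <= hi -> b <= c ->
  (forall u, 0 <= u <= c -> 0 <= x u) ->
  ex_RInt (fun s => exp (- gamma * s) * f s * beta (x (c - s)) * x (c - s)) a b.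
Proof.
  intros Hpc Hb Hx H0 H1 H2 H3 H4 Hxp.
  set (xx := fun u => x (Rmax u 0)).
  set (bb := fun y => beta (Rmax y 0)).
  assert (Hcx : forall z, continuous xx z) by (apply clamp_cont; auto).
  assert (Hcb : forall z, continuous bb z) by (apply clamp_cont; auto).
  assert (Hcm : forall z, continuous (fun s => c - s) z).
  { intros z. apply m_cont. }
  assert (H : ex_RInt (fun s => f s * (exp (- gamma * s) * (bb (xx (c - s)) * xx (c - s)))) lo hi).
  { apply pc_int; auto. intros z.
    apply (continuous_mult (fun s => exp (- gamma * s)) (fun s => bb (xx (c - s)) * xx (c - s))).
    apply exp_cont.
    apply (continuous_mult (fun s => bb (xx (c - s))) (fun s => xx (c - s))).
    - apply continuous_comp with (f := fun s => xx (c - s)) (g := bb); [|apply Hcb].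
      apply continuous_comp with (f := fun s => c - s) (g := xx); auto.
    - apply continuous_comp with (f := fun s => c - s) (g := xx); auto. }
  apply ex_RInt_ext with (fun s => f s * (exp (- gamma * s) * (bb (xx (c - s)) * xx (c - s)))).
  { rewrite Rmin_left, Rmax_right by lra. intros s Hs.
    unfold bb, xx. rewrite (Rmax_left (c - s) 0) by lra.
    rewrite (Rmax_left (x (c - s)) 0) by (apply Hxp; lra). simpl. change (f s * (exp (- gamma * s) * (beta (x (c - s)) * x (c - s))) = exp (- gamma * s) * f s * beta (x (c - s)) * x (c - s)). ring. }
  apply (@ex_RInt_Chasles_2 R_CompleteNormedModule) with lo; [lra|].
  apply (@ex_RInt_Chasles_1 R_CompleteNormedModule) with hi; [lra|]. exact H.
Qed.

Lemma mvt_x (x D : R -> R) a b : continuous_on_nonneg x ->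
  (forall t, 0 < t -> is_derive x t (D t)) -> 0 <= a < b ->
  exists c, a < c < b /\ x b - x a = D c * (b - a).
Proof.
  intros Hx HD Hab.
  set (xx := fun u => x (Rmax u 0)).
  destruct (mvt_open xx D a b) as [c [Hc E]]; [lra| | |].
  - intros c Hc. apply is_derive_ext_loc with x; [|apply HD; lra].
    assert (Hp : 0 < c) by lra.
    exists (mkposreal c Hp). intros y Hy. rewrite ballR in Hy. simpl in Hy.
    apply Rabs_def2 in Hy. unfold xx. rewrite Rmax_left by lra. reflexivity.
  - intros c Hc. apply continuity_pt_filterlim. apply clamp_cont; auto.
  - exists c; split; auto. unfold xx in E. rewrite !Rmax_left in E by lra. exact E.
Qed.

Lemma KL (f beta x : R -> R) gamma lo hi xbar mu c :
  piecewise_continuous_on f lo hi -> (forall s, 0 <= f s) ->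
  continuous_on_nonneg beta -> continuous_on_nonneg x -> 0 <= lo -> lo < hi ->
  (forall s, 0 <= s -> 0 < beta s) ->
  (forall s1 s2, xbar <= s1 -> s1 <= s2 -> s2 * beta s2 <= s1 * beta s1) ->
  xbar <= mu -> 0 < mu ->
  RInt (fun s => exp (- gamma * s) * f s) lo hi > 1 / 2 -> 0 < c ->
  (forall u, 0 <= u <= c -> mu <= x u <= x c) ->
  rhs beta f x gamma lo hi mu c >=
    (2 * RInt (fun s => exp (- gamma * s) * f s) lo hi - 1) * (x c * beta (x c)).
Proof.
  intros Hpc Hf0 Hbc Hxc Hlo Hlohi Hbpos Hgdec Hxbar Hmu HK Hc Hu.
  set (K := RInt (fun s => exp (- gamma * s) * f s) lo hi) in *.
  assert (Hxcm : mu <= x c) by (apply Hu; lra).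
  assert (Hg : x c * beta (x c) <= mu * beta mu) by (apply Hgdec; lra).
  assert (HG0 : 0 <= x c * beta (x c)).
  { apply Rmult_le_pos; [lra|]. left; apply Hbpos; lra. }
  assert (Hef : forall s, 0 <= exp (- gamma * s) * f s).
  { intros s. apply Rmult_le_pos; [left; apply exp_pos|apply Hf0]. }
  assert (Hx0 : forall u, 0 <= u <= c -> 0 <= x u) by (intros u Hu'; specialize (Hu u Hu'); lra).
  assert (Hpt : forall s, lo < s < c ->
     exp (- gamma * s) * f s * (x c * beta (x c)) <= exp (- gamma * s) * f s * beta (x (c - s)) * x (c - s)).
  { intros s Hs.
    assert (Hu1 := Hu (c - s) ltac:(lra)).
    assert (H := Hgdec (x (c - s)) (x c) ltac:(lra) ltac:(lra)).
    replace (exp (- gamma * s) * f s * beta (x (c - s)) * x (c - s))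
      with (exp (- gamma * s) * f s * (x (c - s) * beta (x (c - s)))) by ring.
    apply Rmult_le_compat_l; auto. }
  unfold rhs. fold K. destruct (Rle_dec c lo) as [Hcl|Hcl].
  { assert (K * (x c * beta (x c)) <= K * (mu * beta mu)) by (apply Rmult_le_compat_l; lra).
    assert (E : - beta (x c) * x c + 2 * beta mu * mu * K - (2 * K - 1) * (x c * beta (x c))
      = 2 * (K * (mu * beta mu) - K * (x c * beta (x c)))) by ring.
    lra. }
  destruct (Rle_dec c hi) as [Hch|Hch].
  - assert (E1 : ex_RInt (fun s => exp (- gamma * s) * f s) lo c) by (apply int_ef with lo hi; auto; lra).
    assert (E2 : ex_RInt (fun s => exp (- gamma * s) * f s) c hi) by (apply int_ef with lo hi; auto; lra).
    assert (HC := @RInt_Chasles R_CompleteNormedModule _ lo c hi E1 E2).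
    change (RInt (fun s => exp (- gamma * s) * f s) lo c + RInt (fun s => exp (- gamma * s) * f s) c hi = K) in HC.
    assert (HA : 0 <= RInt (fun s => exp (- gamma * s) * f s) c hi).
    { apply RInt_ge_0; auto. }
    assert (HB : RInt (fun s => exp (- gamma * s) * f s) lo c * (x c * beta (x c)) <=
       RInt (fun s => exp (- gamma * s) * f s * beta (x (c - s)) * x (c - s)) lo c).
    { rewrite <- RInt_mult_const by auto.
      apply RInt_le; [lra| |apply int_I with lo hi; auto; lra|].
      apply ex_RInt_ext with (fun s => scal (x c * beta (x c)) (exp (- gamma * s) * f s)).
      { intros; unfold scal; simpl; unfold mult; simpl; apply Rmult_comm. }
      apply (@ex_RInt_scal R_NormedModule); assumption.
      intros s Hs; apply Hpt; lra. }
    assert (RInt (fun s => exp (- gamma * s) * f s) c hi * (x c * beta (x c)) <=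
            RInt (fun s => exp (- gamma * s) * f s) c hi * (mu * beta mu)) by (apply Rmult_le_compat_l; lra).
    rewrite <- HC.
    set (A := RInt (fun s => exp (- gamma * s) * f s) c hi) in *.
    set (L := RInt (fun s => exp (- gamma * s) * f s) lo c) in *.
    set (B := RInt (fun s => exp (- gamma * s) * f s * beta (x (c - s)) * x (c - s)) lo c) in *.
    assert (E : - beta (x c) * x c + 2 * beta mu * mu * A + 2 * B - (2 * (L + A) - 1) * (x c * beta (x c))
      = 2 * (A * (mu * beta mu) - A * (x c * beta (x c))) + 2 * (B - L * (x c * beta (x c)))) by ring.
    lra.
  - assert (E1 : ex_RInt (fun s => exp (- gamma * s) * f s) lo hi) by (apply int_ef with lo hi; auto; lra).
    assert (HB : K * (x c * beta (x c)) <=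
       RInt (fun s => exp (- gamma * s) * f s * beta (x (c - s)) * x (c - s)) lo hi).
    { unfold K. rewrite <- RInt_mult_const by auto.
      apply RInt_le; [lra| |apply int_I with lo hi; auto; lra|].
      apply ex_RInt_ext with (fun s => scal (x c * beta (x c)) (exp (- gamma * s) * f s)).
      { intros; unfold scal; simpl; unfold mult; simpl; apply Rmult_comm. }
      apply (@ex_RInt_scal R_NormedModule); assumption.
      intros s Hs; apply Hpt; lra. }
    set (B := RInt (fun s => exp (- gamma * s) * f s * beta (x (c - s)) * x (c - s)) lo hi) in *.
    assert (E : - beta (x c) * x c + 2 * B - (2 * K - 1) * (x c * beta (x c))
      = 2 * (B - K * (x c * beta (x c)))) by ring.
    lra.
Qed.

Lemma ef_ext (f : R -> R) gamma lo hi z : piecewise_continuous_on f lo hi ->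
  (forall s, s < lo \/ hi < s -> f s = 0) -> z <= hi -> lo <= hi ->
  ex_RInt (fun s => exp (- gamma * s) * f s) z hi.
Proof.
  intros Hpc Hout Hz Hlh.
  destruct (Rle_dec z lo).
  - apply (@ex_RInt_Chasles R_NormedModule) with lo.
    + apply (zero_part f gamma lo z); [intros; apply Hout; lra|auto].
    + apply int_ef with lo hi; auto; lra.
  - apply int_ef with lo hi; auto; lra.
Qed.

Lemma R0 (f beta x : R -> R) gamma lo hi mu t :
  piecewise_continuous_on f lo hi -> (forall s, 0 <= f s) ->
  (forall s, s < lo \/ hi < s -> f s = 0) ->
  continuous_on_nonneg beta -> continuous_on_nonneg x -> 0 <= lo -> lo < hi ->
  (forall s, 0 <= s -> 0 < beta s) -> 0 < t <= hi ->
  (forall u, 0 <= u <= t -> 0 <= x u) ->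
  rhs beta f x gamma lo hi mu t >=
    - beta (x t) * x t + 2 * beta mu * mu * RInt (fun s => exp (- gamma * s) * f s) t hi.
Proof.
  intros Hpc Hf0 Hout Hbc Hxc Hlo Hlohi Hbpos Ht Hx.
  unfold rhs. destruct (Rle_dec t lo) as [Htl|Htl].
  - destruct (zero_part f gamma lo t) as [E1 E2]; [intros; apply Hout; lra|auto|].
    assert (E3 : ex_RInt (fun s => exp (- gamma * s) * f s) lo hi) by (apply int_ef with lo hi; auto; lra).
    assert (HC := @RInt_Chasles R_CompleteNormedModule _ t lo hi E1 E3).
    change (RInt (fun s => exp (- gamma * s) * f s) t lo + RInt (fun s => exp (- gamma * s) * f s) lo hi
       = RInt (fun s => exp (- gamma * s) * f s) t hi) in HC.
    rewrite <- HC, E2. right; ring.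
  - destruct (Rle_dec t hi) as [Hth|Hth]; [|lra].
    assert (0 <= RInt (fun s => exp (- gamma * s) * f s * beta (x (t - s)) * x (t - s)) lo t).
    { apply RInt_ge_0; [lra|apply int_I with lo hi; auto; lra|].
      intros s Hs. assert (Hxs : 0 <= x (t - s)) by (apply Hx; lra).
      assert (0 < beta (x (t - s))) by (apply Hbpos; auto).
      repeat apply Rmult_le_pos; try lra. left; apply exp_pos. apply Hf0. }
    lra.
Qed.

Lemma L0 (f beta x : R -> R) gamma lo hi mu :
  piecewise_continuous_on f lo hi -> (forall s, 0 <= f s) ->
  (forall s, s < lo \/ hi < s -> f s = 0) ->
  continuous_on_nonneg beta -> continuous_on_nonneg x -> 0 <= lo -> lo < hi ->
  (forall s, 0 <= s -> 0 < beta s) ->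
  RInt (fun s => exp (- gamma * s) * f s) lo hi > 1 / 2 -> 0 < mu -> x 0 = mu ->
  (forall t, 0 < t -> is_derive x t (rhs beta f x gamma lo hi mu t)) ->
  exists d, 0 < d /\ forall t, 0 < t < d -> mu < x t.
Proof.
  intros Hpc Hf0 Hout Hbc Hxc Hlo Hlohi Hbpos HK Hmu Hx0 Hder.
  set (K := RInt (fun s => exp (- gamma * s) * f s) lo hi) in *.
  set (G0 := mu * beta mu).
  assert (HG0 : 0 < G0) by (apply Rmult_lt_0_compat; auto; apply Hbpos; lra).
  set (eta := (2 * K - 1) * G0).
  assert (Heta : 0 < eta) by (apply Rmult_lt_0_compat; lra).
  set (xx := fun u => x (Rmax u 0)).
  set (bb := fun y => beta (Rmax y 0)).
  assert (Hcxx : forall z, continuous xx z) by (apply clamp_cont; auto).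
  assert (Hcbb : forall z, continuous bb z) by (apply clamp_cont; auto).
  assert (Hxx0 : xx 0 = mu) by (unfold xx; rewrite Rmax_left by lra; auto).
  assert (Hq : continuous (fun t => xx t * bb (xx t)) 0).
  { apply (continuous_mult xx (fun t => bb (xx t))); auto.
    apply continuous_comp; auto. }
  assert (Hq0 : xx 0 * bb (xx 0) = G0).
  { rewrite Hxx0. unfold bb, G0. rewrite Rmax_left by lra. auto. }
  assert (Hmu2 : 0 < mu / 2) by lra.
  destruct (proj1 (filterlim_locally _ _) (Hcxx 0) (mkposreal _ Hmu2)) as [da Hda].
  assert (Heta4 : 0 < eta / 4) by lra.
  destruct (proj1 (filterlim_locally _ _) Hq (mkposreal _ Heta4)) as [db Hdb].
  set (If := fun z => RInt (fun s => exp (- gamma * s) * f s) hi z).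
  assert (Hhi : 0 < hi) by lra.
  assert (HexIf : forall z, z < hi -> ex_RInt (fun s => exp (- gamma * s) * f s) hi z).
  { intros z Hz. apply ex_RInt_swap. apply ef_ext with lo; auto; lra. }
  assert (HI : continuous If 0).
  { apply (continuous_RInt_1 (V := R_NormedModule) (fun s => exp (- gamma * s) * f s) hi 0 If).
    exists (mkposreal _ Hhi). intros z Hz. rewrite ballR in Hz. simpl in Hz.
    apply Rabs_def2 in Hz. apply (RInt_correct (V := R_CompleteNormedModule)). apply HexIf. lra. }
  assert (He8 : 0 < eta / (8 * G0)) by (apply Rdiv_lt_0_compat; lra).
  destruct (proj1 (filterlim_locally _ _) HI (mkposreal _ He8)) as [dc Hdc].
  assert (HA : forall z, z < hi -> RInt (fun s => exp (- gamma * s) * f s) z hi = - If z).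
  { intros z Hz. unfold If. rewrite <- (opp_RInt_swap (V := R_CompleteNormedModule)).
    reflexivity. apply HexIf; auto. }
  assert (HK0 : RInt (fun s => exp (- gamma * s) * f s) 0 hi = K).
  { destruct (zero_part f gamma lo 0) as [E1 E2]; [intros; apply Hout; lra|auto|].
    assert (E3 : ex_RInt (fun s => exp (- gamma * s) * f s) lo hi) by (apply int_ef with lo hi; auto; lra).
    assert (HC := @RInt_Chasles R_CompleteNormedModule _ 0 lo hi E1 E3).
    change (RInt (fun s => exp (- gamma * s) * f s) 0 lo + RInt (fun s => exp (- gamma * s) * f s) lo hi
       = RInt (fun s => exp (- gamma * s) * f s) 0 hi) in HC.
    rewrite <- HC, E2. unfold K. apply Rplus_0_l. }
  set (d := Rmin (Rmin da db) (Rmin dc hi)).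
  assert (Hd1 : d <= Rmin da db) by apply Rmin_l.
  assert (Hd2 : d <= Rmin dc hi) by apply Rmin_r.
  assert (Hd3 := Rmin_l da db). assert (Hd4 := Rmin_r da db).
  assert (Hd5 := Rmin_l dc hi). assert (Hd6 := Rmin_r dc hi).
  assert (Hdpos : 0 < d).
  { unfold d. apply Rmin_pos; apply Rmin_pos; try apply cond_pos; lra. }
  assert (Hxpos : forall u, 0 <= u < d -> mu / 2 < x u).
  { intros u Hu.
    assert (H1 : ball 0 da u) by (rewrite ballR, Rminus_0_r, Rabs_pos_eq; lra).
    assert (H := Hda u H1). rewrite ballR in H. simpl in H.
    rewrite Hxx0 in H. unfold xx in H. rewrite Rmax_left in H by lra.
    apply Rabs_def2 in H. lra. }
  assert (Hrhs : forall s, 0 < s < d -> 0 < rhs beta f x gamma lo hi mu s).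
  { intros s Hs.
    assert (HR := R0 f beta x gamma lo hi mu s Hpc Hf0 Hout Hbc Hxc Hlo Hlohi Hbpos ltac:(lra)).
    assert (HR' : rhs beta f x gamma lo hi mu s >=
      - beta (x s) * x s + 2 * beta mu * mu * RInt (fun s => exp (- gamma * s) * f s) s hi).
    { apply HR. intros u Hu. assert (H := Hxpos u ltac:(lra)). lra. }
    assert (Hqs : Rabs (x s * beta (x s) - G0) < eta / 4).
    { assert (H1 : ball 0 db s) by (rewrite ballR, Rminus_0_r, Rabs_pos_eq; lra).
      assert (H := Hdb s H1). rewrite ballR in H. simpl in H. rewrite Hq0 in H.
      unfold xx, bb in H. rewrite (Rmax_left s 0) in H by lra.
      rewrite (Rmax_left (x s) 0) in H by (assert (H' := Hxpos s ltac:(lra)); lra).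
      exact H. }
    assert (HIs : Rabs (If s - If 0) < eta / (8 * G0)).
    { apply (Hdc s). rewrite ballR. simpl. rewrite Rminus_0_r, Rabs_pos_eq; lra. }
    rewrite HA in HR' by lra.
    assert (HI0 : If 0 = - K) by (rewrite <- HK0, HA by lra; symmetry; apply Ropp_involutive).
    rewrite HI0 in HIs. apply Rabs_def2 in Hqs. apply Rabs_def2 in HIs.
    assert (Hm : G0 * (K + If s) < G0 * (eta / (8 * G0))) by (apply Rmult_lt_compat_l; lra).
    replace (G0 * (eta / (8 * G0))) with (eta / 8) in Hm by (field; lra).
    assert (E1 : beta mu * mu * - If s = - (G0 * If s)) by (unfold G0; ring).
    assert (E2 : eta = 2 * K * G0 - G0) by (unfold eta; ring).
    assert (E3 : beta (x s) * x s = x s * beta (x s)) by ring.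
    lra. }
  exists d; split; auto.
  intros t Ht.
  destruct (mvt_x x (rhs beta f x gamma lo hi mu) 0 t Hxc Hder ltac:(lra)) as [c [Hc E]].
  assert (H := Hrhs c ltac:(lra)).
  assert (0 < rhs beta f x gamma lo hi mu c * (t - 0)) by (apply Rmult_lt_0_compat; lra).
  lra.
Qed.

Theorem proposition2p3
  (tau_lo tau_hi gamma : R) (f beta : R -> R) (xbar mu : R) (x : R -> R) :
  0 <= tau_lo -> tau_lo < tau_hi -> 0 <= gamma ->
  pc_density_on f tau_lo tau_hi ->
  (forall s, 0 <= s -> 0 < beta s) ->
  continuous_on_nonneg beta ->
  (forall s1 s2, 0 <= s1 -> s1 <= s2 -> beta s2 <= beta s1) ->
  is_lim beta p_infty 0 ->
  (exists L : R, forall s1 s2, 0 <= s1 -> 0 <= s2 ->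
      Rabs (s1 * beta s1 - s2 * beta s2) <= L * Rabs (s1 - s2)) ->
  RInt (fun s => exp (- gamma * s) * f s) tau_lo tau_hi > 1 / 2 ->
  0 <= xbar ->
  (forall s1 s2, xbar <= s1 -> s1 <= s2 -> s2 * beta s2 <= s1 * beta s1) ->
  0 <= mu ->
  (* x is the continuous solution on [0,+oo) of the delayed equation *)
  x 0 = mu ->
  continuous_on_nonneg x ->
  (forall t, 0 < t -> is_derive x t (rhs beta f x gamma tau_lo tau_hi mu t)) ->
  mu >= xbar ->
  is_lim x p_infty p_infty.
Proof.
  intros Hlo Hlohi Hg Hdens Hbpos Hbcont Hbdec Hblim HLip HK Hxbar Hgdec Hmu Hx0 Hxc Hder Hmuxbar.
  destruct Hdens as [Hpc [Hf0 [Hout _]]].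
  assert (Hxbarpos : 0 < xbar).
  { destruct Hxbar as [H|H]; auto. exfalso.
    assert (H1 := Hgdec xbar 1 ltac:(lra) ltac:(lra)).
    assert (H2 := Hbpos 1 ltac:(lra)). rewrite <- H in H1. lra. }
  assert (Hmupos : 0 < mu) by lra.
  assert (Hxbm : xbar <= mu) by lra.
  set (K := RInt (fun s => exp (- gamma * s) * f s) tau_lo tau_hi) in *.
  assert (Hpos : forall c, 0 < c -> (forall u, 0 <= u <= c -> mu <= x u <= x c) ->
            0 < rhs beta f x gamma tau_lo tau_hi mu c).
  { intros c Hc Hu.
    assert (H := KL f beta x gamma tau_lo tau_hi xbar mu c Hpc Hf0 Hbcont Hxc Hlo Hlohi Hbpos Hgdec Hxbm Hmupos HK Hc Hu).
    fold K in H.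
    assert (Hxc' : mu <= x c) by (apply Hu; lra).
    assert (0 < (2 * K - 1) * (x c * beta (x c))).
    { apply Rmult_lt_0_compat; [lra|]. apply Rmult_lt_0_compat; [lra|]. apply Hbpos; lra. }
    lra. }
  assert (Mono : forall b u, 0 <= u <= b -> x u <= x b).
  { destruct (classic (forall b u, 0 <= u <= b -> x u <= x b)) as [H|H]; auto. exfalso.
    apply not_all_ex_not in H. destruct H as [b0 H].
    apply not_all_ex_not in H. destruct H as [u0 H].
    apply imply_to_and in H. destruct H as [Hu0 Hb0]. apply Rnot_le_lt in Hb0.
    set (S := fun t => 0 <= t /\ forall b u, 0 <= u -> u <= b -> b <= t -> x u <= x b).
    assert (HS0 : S 0).
    { split; [lra|]. intros b u Hu1 Hu2 Hu3. assert (u = b) by lra. subst; lra. }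
    assert (HSb : bound S).
    { exists b0. intros t [Ht0 Ht]. destruct (Rle_dec t b0); auto.
      assert (x u0 <= x b0) by (apply Ht; lra). lra. }
    destruct (completeness S HSb (ex_intro _ 0 HS0)) as [T [HTub HTl]].
    assert (HT0 : 0 <= T) by (apply HTub; auto).
    assert (Hlt : forall b u, 0 <= u <= b -> b < T -> x u <= x b).
    { intros b u Hbu HbT.
      destruct (classic (exists t, S t /\ b < t)) as [[t [[_ St] Hbt]]|Hn].
      - apply St; lra.
      - exfalso. assert (T <= b); [|lra]. apply HTl. intros t Ht.
        destruct (Rle_dec t b) as [|Hnt]; auto. exfalso. apply Hn. exists t. split; auto. lra. }
    assert (ST : forall b u, 0 <= u -> u <= b -> b <= T -> x u <= x b).
    { intros b u Hu1 Hu2 Hu3. destruct (Rlt_dec b T) as [HbT|HbT]. apply Hlt; lra.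
      assert (b = T) by lra. subst b.
      destruct (Req_dec u T) as [->|HuT]; [lra|].
      destruct (Rle_dec (x u) (x T)) as [|Hn]; auto. exfalso. apply Rnot_le_lt in Hn.
      assert (Heps : 0 < x u - x T) by lra.
      destruct (proj1 (filterlim_locally _ _) (Hxc T HT0) (mkposreal _ Heps)) as [dl Hdl].
      set (y := Rmax u (T - dl / 2)).
      assert (Hy1 : u <= y) by apply Rmax_l. assert (Hy2 : T - dl / 2 <= y) by apply Rmax_r.
      assert (Hdlp := cond_pos dl).
      assert (Hy3 : y < T).
      { unfold y. apply Rmax_lub_lt; lra. }
      assert (Hxy : x u <= x y) by (apply Hlt; lra).
      assert (Hb : ball T dl y).
      { rewrite ballR. apply Rabs_def1; lra. }
      assert (H := Hdl y Hb ltac:(lra)). rewrite ballR in H. simpl in H.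
      apply Rabs_def2 in H. lra. }
    assert (Step2 : exists d, 0 < d /\ forall t, T < t < T + d -> x T < x t).
    { destruct (Req_dec T 0) as [HT|HT].
      - destruct (L0 f beta x gamma tau_lo tau_hi mu Hpc Hf0 Hout Hbcont Hxc Hlo Hlohi Hbpos HK Hmupos Hx0 Hder)
          as [d [Hd Hdt]].
        exists d; split; auto. intros t Ht. rewrite HT, Hx0. apply Hdt; lra.
      - assert (HTp : 0 < T) by lra.
        assert (Hr := Hpos T HTp).
        assert (Hr' : 0 < rhs beta f x gamma tau_lo tau_hi mu T).
        { apply Hr. intros u Hu. split.
          - rewrite <- Hx0. apply ST; lra.
          - apply ST; lra. }
        destruct (deriv_pos x T _ (Hder T HTp) Hr') as [d [Hd Hdt]].
        exists d; split; auto. intros t Ht.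
        replace t with (T + (t - T)) by ring. apply Hdt; lra. }
    destruct Step2 as [d [Hd Hdt]].
    assert (S (T + d / 2)).
    { split; [lra|]. intros b u Hu1 Hu2 Hu3. destruct (Rle_dec b T) as [HbT|HbT].
      { apply ST; lra. }
      destruct (Rle_dec (x u) (x b)) as [|Hn]; auto. exfalso. apply Rnot_le_lt in Hn.
      set (xx := fun v => x (Rmax v 0)).
      destruct (continuity_ab_maj xx 0 b) as [c [Hcmax Hc]]; [lra| |].
      { intros c _. apply continuity_pt_filterlim. apply clamp_cont; auto. }
      assert (Hmax : forall v, 0 <= v <= b -> x v <= x c).
      { intros v Hv. assert (H := Hcmax v Hv). unfold xx in H.
        rewrite !Rmax_left in H by lra. exact H. }
      assert (Hmid : x T < x ((T + b) / 2)) by (apply Hdt; lra).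
      assert (HcT : T < c).
      { destruct (Rle_dec c T) as [HcT|HcT]; [|lra].
        assert (x c <= x T) by (apply ST; lra).
        assert (x ((T + b) / 2) <= x c) by (apply Hmax; lra). lra. }
      assert (Hcb : c < b).
      { destruct (Req_dec c b) as [->|]; [|lra].
        assert (x u <= x b) by (apply Hmax; lra). lra. }
      assert (Hcp : 0 < c) by lra.
      assert (Hr : 0 < rhs beta f x gamma tau_lo tau_hi mu c).
      { apply Hpos; auto. intros v Hv. split.
        - destruct (Rle_dec v T).
          + rewrite <- Hx0. apply ST; lra.
          + assert (x T < x v) by (apply Hdt; lra).
            assert (x 0 <= x T) by (apply ST; lra). lra.
        - apply Hmax; lra. }
      destruct (deriv_pos x c _ (Hder c Hcp) Hr) as [d2 [Hd2 Hdt2]].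
      set (h := Rmin d2 (b - c) / 2).
      assert (Hh1 : Rmin d2 (b - c) <= d2) by apply Rmin_l. assert (Hh2 : Rmin d2 (b - c) <= b - c) by apply Rmin_r.
      assert (Hh3 : 0 < Rmin d2 (b - c)) by (apply Rmin_pos; lra).
      assert (H1 : x c < x (c + h)) by (apply Hdt2; unfold h; lra).
      assert (H2 : x (c + h) <= x c) by (apply Hmax; unfold h; lra).
      lra. }
    assert (T + d / 2 <= T) by (apply HTub; auto). lra. }
  unfold is_lim, filterlim, filter_le, filtermap.
  intros P [M HM].
  assert (Hex : exists t0, 0 <= t0 /\ M < x t0).
  { destruct (classic (exists t0, 0 <= t0 /\ M < x t0)) as [H|H]; auto. exfalso.
    assert (Hb : forall t, 0 <= t -> x t <= M).
    { intros t Ht. destruct (Rle_dec (x t) M); auto. exfalso. apply H. exists t. split; auto. lra. }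
    assert (HM0 : mu <= M) by (rewrite <- Hx0; apply Hb; lra).
    set (dd := (2 * K - 1) * (M * beta M)).
    assert (Hdd : 0 < dd).
    { apply Rmult_lt_0_compat; [lra|]. apply Rmult_lt_0_compat; [lra|]. apply Hbpos; lra. }
    assert (Hlow : forall c, 0 < c -> dd <= rhs beta f x gamma tau_lo tau_hi mu c).
    { intros c Hc.
      assert (Hu : forall u, 0 <= u <= c -> mu <= x u <= x c).
      { intros u Hu. split; [rewrite <- Hx0|]; apply Mono; lra. }
      assert (H1 := KL f beta x gamma tau_lo tau_hi xbar mu c Hpc Hf0 Hbcont Hxc Hlo Hlohi Hbpos Hgdec Hxbm Hmupos HK Hc Hu).
      fold K in H1.
      assert (Hxc' : mu <= x c <= M) by (split; [apply (Hu c); lra | apply Hb; lra]).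
      assert (H2 : M * beta M <= x c * beta (x c)) by (apply Hgdec; lra).
      assert (dd <= (2 * K - 1) * (x c * beta (x c))) by (apply Rmult_le_compat_l; lra).
      lra. }
    set (t1 := (M - mu) / dd + 1).
    assert (Ht1 : 0 < t1).
    { unfold t1. assert (0 <= (M - mu) / dd) by (apply Rdiv_le_0_compat; lra). lra. }
    destruct (mvt_x x (rhs beta f x gamma tau_lo tau_hi mu) 0 t1 Hxc Hder ltac:(lra)) as [c [Hc E]].
    assert (H3 : dd * (t1 - 0) <= rhs beta f x gamma tau_lo tau_hi mu c * (t1 - 0)).
    { apply Rmult_le_compat_r; [lra|]. apply Hlow; lra. }
    assert (H4 : dd * (t1 - 0) = M - mu + dd) by (unfold t1; field; lra).
    assert (x t1 <= M) by (apply Hb; lra). lra. }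
  destruct Hex as [t0 [Ht0 Hxt0]].
  exists t0. intros t Ht. apply HM.
  assert (x t0 <= x t) by (apply Mono; lra). lra.
Qed.
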